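(* Let $(G,H)$ be a simple pair with a general solution $(c^*,D^*,l^*,d^*,f^*,(\gamma^*,x^* ))$ witnessing simplicity. Suppose there exist $i\in F$ and $P\in\mathcal P[i]$ such that $|E(P)\cap\delta_G(C)|\le1$ for every set $C\subseteq V$ that is tight with respect to $c^*,D^*$. Then $(G,H)$ is cut-sufficient (its flow-cut gap equals $1$).
   Context: $G=(V,E)$ (supply) and $H=(V,F)$ (demand) are finite graphs on the same vertex set; $\mathcal P[i]$ is the set of simple paths in $G$ joining the endpoints of $i\in F$; $\delta_G(C)$, $\delta_H(C)$ are the edges with exactly one endpoint in $C$. For $c,D$, $\sigma(C)=\sum_{e\in\delta_G(C)}c_e-\sum_{i\in\delta_H(C)}D_i$; $C$ is tight if $\sigma(C)=0$. $(G,H)$ is cut-sufficient if every choice of $c,D\ge0$ with $\sigma(C)\ge0$ for all $C$ admits a multiflow $f^i_P\ge0$ with $\sum_{(i,P):e\in P}f^i_P\le c_e$ for all $e$ and $\sum_{P\in\mathcal P[i]}f^i_P\ge D_i$ for all $i$. LPs: for fixed $c,D$, (P): minimize $\alpha$ over $\alpha$, $f^i_P\ge0$ with $\sum_{(i,P):e\in P}f^i_P\le\alpha c_e$ and $\sum_{P\in\mathcal P[i]}f^i_P\ge D_i$; its dual (D): maximize $\sum_iD_id_i$ over $l,d\ge0$ with $\sum_ec_el_e=1$, $d_i\le\sum_{e\in P}l_e$ for all $i,P\in\mathcal P[i]$. For fixed $l,d$, (D$'$): maximize $\sum_id_iD_i$ over $c,D\ge0$ with $\sum_el_ec_e=1$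 and $\sum_{i\in\delta_H(C)}D_i\le\sum_{e\in\delta_G(C)}c_e$ for all $C$; its dual (P$'$): minimize $\gamma$ over $\gamma$, $x_C\ge0$ with $\sum_{C:e\in\delta_G(C)}x_C\le\gamma l_e$ and $\sum_{C:i\in\delta_H(C)}x_C\ge d_i$. (+): maximize $\sum_iD_id_i$ over $c,D,l,d\ge0$ with $\sum_ec_el_e=1$, $d_i\le\sum_{e\in P}l_e$ for all $i,P$, and the cut condition; its optimal value is the flow-cut gap of $(G,H)$. A general solution is a tuple $(c^*,D^*,l^*,d^*,f^*,(\gamma^*,x^* ))$ with $(c^*,D^*,l^*,d^* )$ optimal for (+), $f^*$ optimal for (P) with parameters $(c^*,D^* )$ and complementary-slack with $(l^*,d^* )$ for (D), and $(\gamma^*,x^* )$ optimal for (P$'$) with parameters $(l^*,d^* )$ and complementary-slack with $(c^*,D^* )$ for (D$'$). A pair is simple if it has a general solution with $c^*_e>0$, $l^*_e>0$ for all $e$ and $D^*_i>0$ for all $i$. *)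

(* Defs.v *)
From HB Require Import structures.
From mathcomp Require Import all_boot all_order all_algebra.
From Stdlib Require Import ClassicalDescription.
Set Implicit Arguments. Unset Strict Implicit. Unset Printing Implicit Defensive.
Import Order.TTheory GRing.Theory Num.Theory.
Local Open Scope ring_scope.

(* A (multi)graph on vertex set V: a finite edge type with an endpoint map.
   G = (V, EG, eG) is the supply graph, H = (V, FH, eH) the demand graph. *)

Section Multiflow.
Variables (R : rcfType) (V EG FH : finType).
Variables (eG : EG -> V * V) (eH : FH -> V * V).

Definition loopless (T : finType) (ends : T -> V * V) : Prop :=
  forall e, (ends e).1 != (ends e).2.

Definition joins (e : EG) (u v : V) : bool :=
  (eG e == (u, v)) || (eG e == (v, u)).

Fixpoint is_walk (x : V) (vs : seq V) (es : seq EG) : bool :=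
  match vs, es with
  | [::], [::] => true
  | y :: vs', e :: es' => joins e x y && is_walk y vs' es'
  | _, _ => false
  end.

(* P : {set EG} is (the edge set of) a simple path in G from s to t.
   A simple path is determined by its edge set and its endpoints, so the
   paths of P[i] are represented by their edge sets. *)
Definition simple_path (s t : V) (P : {set EG}) : Prop :=
  exists (vs : seq V) (es : seq EG),
    [/\ is_walk s vs es, uniq (s :: vs), last s vs = t & P = [set e in es]].

Definition inPi (i : FH) (P : {set EG}) : Prop :=
  simple_path (eH i).1 (eH i).2 P.

Definition inPib (i : FH) (P : {set EG}) : bool :=
  if excluded_middle_informative (inPi i P) then true else false.

Definition deltaG (C : {set V}) : {set EG} :=
  [set e | ((eG e).1 \in C) != ((eG e).2 \in C)].
Definition deltaH (C : {set V}) : {set FH} :=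
  [set i | ((eH i).1 \in C) != ((eH i).2 \in C)].

Definition sigma (c : EG -> R) (D : FH -> R) (C : {set V}) : R :=
  \sum_(e in deltaG C) c e - \sum_(i in deltaH C) D i.

Definition tight (c : EG -> R) (D : FH -> R) (C : {set V}) : Prop :=
  sigma c D C = 0.

Definition cut_condition (c : EG -> R) (D : FH -> R) : Prop :=
  forall C : {set V}, 0 <= sigma c D C.

(* multiflows: f i P = f^i_P, only meaningful for P \in P[i] *)
Definition load (f : FH -> {set EG} -> R) (e : EG) : R :=
  \sum_(i : FH) \sum_(P : {set EG} | inPib i P && (e \in P)) f i P.

Definition flow_value (f : FH -> {set EG} -> R) (i : FH) : R :=
  \sum_(P : {set EG} | inPib i P) f i P.

Definition path_length (l : EG -> R) (P : {set EG}) : R :=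
  \sum_(e in P) l e.

Definition cut_sufficient : Prop :=
  forall (c : EG -> R) (D : FH -> R),
    (forall e, 0 <= c e) -> (forall i, 0 <= D i) -> cut_condition c D ->
    exists f : FH -> {set EG} -> R,
      [/\ forall i P, inPi i P -> 0 <= f i P,
          forall e, load f e <= c e &
          forall i, D i <= flow_value f i].

Definition P_feasible (c : EG -> R) (D : FH -> R)
    (alpha : R) (f : FH -> {set EG} -> R) : Prop :=
  [/\ forall i P, inPi i P -> 0 <= f i P,
      forall e, load f e <= alpha * c e &
      forall i, D i <= flow_value f i].

Definition P_optimal c D alpha f : Prop :=
  P_feasible c D alpha f /\
  forall alpha' f', P_feasible c D alpha' f' -> alpha <= alpha'.

Definition D_feasible (c : EG -> R) (l : EG -> R) (d : FH -> R) : Prop :=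
  [/\ forall e, 0 <= l e, forall i, 0 <= d i,
      \sum_e c e * l e = 1 &
      forall i P, inPi i P -> d i <= path_length l P].

Definition PD_compl_slack (c : EG -> R) (D : FH -> R) alpha f l d : Prop :=
  [/\ forall i P, inPi i P -> 0 < f i P -> d i = path_length l P,
      forall e, 0 < l e -> load f e = alpha * c e &
      forall i, 0 < d i -> flow_value f i = D i].

Definition D'_feasible (l : EG -> R) (c : EG -> R) (D : FH -> R) : Prop :=
  [/\ forall e, 0 <= c e, forall i, 0 <= D i,
      \sum_e l e * c e = 1 &
      forall C : {set V}, \sum_(i in deltaH C) D i <= \sum_(e in deltaG C) c e].

Definition P'_feasible (l : EG -> R) (d : FH -> R)
    (gamma : R) (x : {set V} -> R) : Prop :=
  [/\ forall C, 0 <= x C,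
      forall e, \sum_(C : {set V} | e \in deltaG C) x C <= gamma * l e &
      forall i, d i <= \sum_(C : {set V} | i \in deltaH C) x C].

Definition P'_optimal l d gamma x : Prop :=
  P'_feasible l d gamma x /\
  forall gamma' x', P'_feasible l d gamma' x' -> gamma <= gamma'.

Definition P'D'_compl_slack (l : EG -> R) (d : FH -> R) gamma x c D : Prop :=
  [/\ forall e, 0 < c e -> \sum_(C : {set V} | e \in deltaG C) x C = gamma * l e,
      forall i, 0 < D i -> \sum_(C : {set V} | i \in deltaH C) x C = d i &
      forall C, 0 < x C -> tight c D C].

Definition plus_feasible c D l d : Prop :=
  [/\ forall e, 0 <= c e, forall i, 0 <= D i,
      D_feasible c l d & cut_condition c D].

Definition plus_value (D d : FH -> R) : R := \sum_i D i * d i.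

Definition plus_optimal c D l d : Prop :=
  plus_feasible c D l d /\
  forall c' D' l' d', plus_feasible c' D' l' d' ->
    plus_value D' d' <= plus_value D d.

(* general solution (c_, D_, l_, d_, f_, (gamma_, x_)); alpha_ is the
   optimal value of (P) accompanying f_ *)
Definition general_solution c D l d (f : FH -> {set EG} -> R)
    (gamma : R) (x : {set V} -> R) : Prop :=
  [/\ plus_optimal c D l d,
      exists alpha, P_optimal c D alpha f /\ PD_compl_slack c D alpha f l d,
      P'_optimal l d gamma x &
      P'D'_compl_slack l d gamma x c D].

Definition witnesses_simple c D l d f gamma x : Prop :=
  [/\ general_solution c D l d f gamma x,
      forall e, 0 < c e, forall e, 0 < l e & forall i, 0 < D i].

End Multiflow.

(* Main.v *)
Require Import Defs.
From HB Require Import structures.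
From mathcomp Require Import all_boot all_order all_algebra ring lra.
From Stdlib Require Import ClassicalDescription.
Set Implicit Arguments. Unset Strict Implicit. Unset Printing Implicit Defensive.
Import Order.TTheory GRing.Theory Num.Theory.
Local Open Scope ring_scope.

Section Farkas.
Variable R : realFieldType.

Lemma sum_delta (K : finType) (p : K) (a : R) (g : K -> R) :
  \sum_k (if k == p then a else 0) * g k = a * g p.
Proof.
rewrite (bigD1 p) //= eqxx big1 ?addr0 // => k /negbTE ->; by rewrite mul0r.
Qed.

Lemma lift_lemma (K : finType) (al r bb : K -> R) :
  (forall k, al k = 0 -> r k <= bb k) ->
  (forall p q, 0 < al p -> al q < 0 ->
     - al q * r p + al p * r q <= - al q * bb p + al p * bb q) ->
  exists t, forall k, r k + al k * t <= bb k.
Proof.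
move=> H1 H2.
pose u k := (bb k - r k) / al k.
case: (pickP (fun k => 0 < al k)) => [p0 Hp0 | none].
  case: (@Order.TotalTheory.arg_minP _ R K p0 (fun k => 0 < al k) u Hp0) => p Hp Hmin.
  exists (u p) => k.
  case: (ltrgt0P (al k)) => [hk|hk|hk].
  - have := Hmin k hk; rewrite /u => hle.
    have: al k * ((bb p - r p) / al p) <= al k * ((bb k - r k) / al k).
      by rewrite ler_pM2l.
    have -> : al k * ((bb k - r k) / al k) = bb k - r k by field; rewrite gt_eqF.
    move=> h; lra.
  - have H := H2 p k Hp hk.
    rewrite -(ler_pM2l Hp) /u.
    have -> : al p * (r k + al k * ((bb p - r p) / al p)) =
              al p * r k + al k * (bb p - r p).
      by field; rewrite gt_eqF.
    lra.
  - by rewrite hk mul0r addr0; apply: H1.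
case: (pickP (fun k => al k < 0)) => [q0 Hq0 | none2].
  case: (@Order.TotalTheory.arg_maxP _ R K q0 (fun k => al k < 0) u Hq0) => q Hq Hmax.
  exists (u q) => k.
  case: (ltrgt0P (al k)) => [hk|hk|hk].
  - by move: (none k) => /= ; rewrite hk.
  - have := Hmax k hk; rewrite /u => hle.
    have: al k * ((bb q - r q) / al q) <= al k * ((bb k - r k) / al k).
      by rewrite ler_nM2l.
    have -> : al k * ((bb k - r k) / al k) = bb k - r k by field; rewrite lt_eqF.
    move=> h; lra.
  - by rewrite hk mul0r addr0; apply: H1.
exists 0 => k; rewrite mulr0 addr0; apply: H1.
move: (none k) (none2 k) => /= /negbT h1 /negbT h2.
by move: h1 h2; rewrite -!leNgt => h1 h2; lra.
Qed.

Section FMStep.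
Variables (n : nat) (K : finType) (al : K -> R).

Definition comb (k' : K + K * K) (g : K -> R) : R :=
  match k' with
  | inl k => if al k == 0 then g k else 0
  | inr (p, q) => if (0 < al p) && (al q < 0) then - al q * g p + al p * g q else 0
  end.

Definition wt (k' : K + K * K) (k2 : K) : R :=
  match k' with
  | inl k => if al k == 0 then (if k2 == k then 1 else 0) else 0
  | inr (p, q) => if (0 < al p) && (al q < 0) then
       (if k2 == p then - al q else 0) + (if k2 == q then al p else 0) else 0
  end.

Lemma combE k' g : comb k' g = \sum_k2 wt k' k2 * g k2.
Proof.
case: k' => [k|[p q]] /=.
  case: ifP => _; last by rewrite big1 // => ? _; rewrite mul0r.
  by rewrite sum_delta mul1r.
case: ifP => _; last by rewrite big1 // => ? _; rewrite mul0r.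
rewrite (eq_bigr (fun k2 => (if k2 == p then - al q else 0) * g k2 +
                    (if k2 == q then al p else 0) * g k2)); last first.
  by move=> k2 _; rewrite mulrDl.
by rewrite big_split /= !sum_delta.
Qed.

Lemma wt_ge0 k' k2 : 0 <= wt k' k2.
Proof.
case: k' => [k|[p q]] /=; first by case: (al k == 0) => //; case: (k2 == k).
case: ifP => // /andP [hp hq].
apply: addr_ge0; case: ifP => // _; [by rewrite oppr_ge0 ltW | exact: ltW].
Qed.

Lemma comb_al k' : comb k' al = 0.
Proof.
case: k' => [k|[p q]] /=; first by case: ifP => // /eqP.
by case: ifP => // _; ring.
Qed.

Lemma backL (y' : K + K * K -> R) (g : K -> R) :
  \sum_k (\sum_k' y' k' * wt k' k) * g k = \sum_k' y' k' * comb k' g.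
Proof.
under eq_bigr do rewrite mulr_suml.
rewrite exchange_big /=; apply: eq_bigr => k' _.
by rewrite combE mulr_sumr; apply: eq_bigr => k _; rewrite mulrA.
Qed.

Lemma combL (m : nat) (G : K -> 'I_m -> R) (x : 'I_m -> R) k' :
  comb k' (fun k => \sum_j G k j * x j) = \sum_j comb k' (fun k => G k j) * x j.
Proof.
rewrite combE /=; under [RHS]eq_bigr do rewrite combE mulr_suml.
under eq_bigr do rewrite mulr_sumr.
rewrite exchange_big /=; apply: eq_bigr => j _; apply: eq_bigr => k _.
by rewrite mulrA.
Qed.

End FMStep.

Lemma ord_cases (n : nat) (j : 'I_n.+1) :
  j = ord_max \/ exists j0 : 'I_n, j = widen_ord (leqnSn n) j0.
Proof.
have [jlt|jge] := ltnP j n.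
  by right; exists (Ordinal jlt); apply: val_inj.
left; apply: val_inj => /=; apply/eqP; rewrite eqn_leq jge.
by rewrite -ltnS ltn_ord.
Qed.

Lemma farkas_ord (n : nat) : forall (K : finType) (A : K -> 'I_n -> R) (b : K -> R),
  (exists x : 'I_n -> R, forall k, \sum_j A k j * x j <= b k) \/
  (exists y : K -> R, [/\ forall k, 0 <= y k,
      forall j, \sum_k y k * A k j = 0 & \sum_k y k * b k < 0]).
Proof.
elim: n => [|n IH] K A b.
  case: (pickP (fun k => b k < 0)) => [k0 hk0 | nob].
    right; exists (fun k => if k == k0 then 1 else 0); split.
    - by move=> k; case: ifP.
    - by case.
    - by rewrite sum_delta mul1r.
  left; exists (fun _ => 0) => k; rewrite big_ord0.
  by move: (nob k) => /= /negbT; rewrite -leNgt.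
pose al k := A k ord_max.
pose A' k' (j : 'I_n) := comb al k' (fun k => A k (widen_ord (leqnSn n) j)).
pose b' k' := comb al k' b.
case: (IH _ A' b') => [[x' Hx'] | [y' [Hy1 Hy2 Hy3]]].
  pose r k := \sum_j A k (widen_ord (leqnSn n) j) * x' j.
  have Hc k' : comb al k' r <= comb al k' b.
    by rewrite /r combL; apply: Hx'.
  have [t Ht] : exists t, forall k, r k + al k * t <= b k.
    apply: lift_lemma.
      move=> k hk; have := Hc (inl k); by rewrite /= hk eqxx.
    move=> p q hp hq; have := Hc (inr (p, q)); by rewrite /= hp hq.
  left; exists (fun j => if (insub (j : nat) : option 'I_n) is Some j' then x' j' else t).
  move=> k; rewrite big_ord_recr /=.
  rewrite insubN /=; last by rewrite ltnn.
  have <- : r k = \sum_(i < n) A k (widen_ord (leqnSn n) i) *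
      (if (insub (widen_ord (leqnSn n) i : nat) : option 'I_n) is Some j' then x' j' else t).
    by apply: eq_bigr => i _; rewrite /= valK.
  exact: Ht.
right; exists (fun k => \sum_k' y' k' * wt al k' k); split.
- by move=> k; apply: sumr_ge0 => k' _; apply: mulr_ge0 => //; apply: wt_ge0.
- move=> j; rewrite backL.
  case: (ord_cases j) => [->|[j0 ->]].
    by rewrite big1 // => k' _; rewrite (comb_al al k') mulr0.
  exact: Hy2.
- by rewrite backL.
Qed.

Lemma farkas (J K : finType) (A : K -> J -> R) (b : K -> R) :
  (exists x : J -> R, forall k, \sum_v A k v * x v <= b k) \/
  (exists y : K -> R, [/\ forall k, 0 <= y k,
      forall v, \sum_k y k * A k v = 0 & \sum_k y k * b k < 0]).
Proof.
case: (farkas_ord (fun k (j : 'I_#|J|) => A k (enum_val j)) b) => [[x Hx]|[y [H1 H2 H3]]].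
  left; exists (fun v => x (enum_rank v)) => k.
  rewrite (reindex (fun j : 'I_#|J| => enum_val j)) /=; last first.
    by apply: onW_bij; apply: enum_val_bij.
  by under eq_bigr do rewrite enum_valK; apply: Hx.
right; exists y; split => // v.
by rewrite -(enum_rankK v); apply: H2.
Qed.

End Farkas.
Section Walks.
Variables (R : rcfType) (V EG : finType) (eG : EG -> V * V).

Lemma walk_edge_ends x vs es e : is_walk eG x vs es -> e \in es ->
  ((eG e).1 \in x :: vs) && ((eG e).2 \in x :: vs).
Proof.
elim: vs x es => [|y vs IH] x [|e' es] //= /andP [hj hw].
rewrite in_cons => /orP [/eqP -> | he].
  move: hj; rewrite /joins => /orP [] /eqP ->; by rewrite /= !inE !eqxx ?orbT.
have /andP [h1 h2] := IH _ _ hw he.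
by rewrite !(in_cons x) h1 h2 !orbT.
Qed.

Lemma walk_uniq x vs es : is_walk eG x vs es -> uniq (x :: vs) -> uniq es.
Proof.
elim: vs x es => [|y vs IH] x [|e' es] //= /andP [hj hw] /andP [hx hu].
rewrite (IH _ _ hw hu) andbT.
apply/negP => he; have /andP [h1 h2] := walk_edge_ends hw he.
move: hj; rewrite /joins => /orP [] /eqP hE; rewrite hE /= in h1 h2.
  by rewrite h1 in hx.
by rewrite h2 in hx.
Qed.

Lemma walk_parity (C : {set V}) x vs es : is_walk eG x vs es ->
  odd (count (mem (deltaG eG C)) es) = ((x \in C) != (last x vs \in C)).
Proof.
elim: vs x es => [|y vs IH] x [|e' es] //=; first by rewrite eqxx.
move=> /andP [hj hw]; rewrite oddD oddb (IH _ _ hw).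
have -> : (e' \in deltaG eG C) = ((x \in C) != (y \in C)).
  rewrite /deltaG inE; move: hj; rewrite /joins => /orP [] /eqP -> /=;
  by case: (x \in C); case: (y \in C).
by case: (x \in C); case: (y \in C); case: (last y vs \in C).
Qed.

Lemma card_walk (C : {set V}) (es : seq EG) : uniq es ->
  #|[set e in es] :&: deltaG eG C| = count (mem (deltaG eG C)) es.
Proof.
move=> hu.
have -> : [set e in es] :&: deltaG eG C = [set e in filter (mem (deltaG eG C)) es].
  by apply/setP => e; rewrite !inE mem_filter /= inE andbC.
rewrite cardsE -size_filter; apply/card_uniqP; exact: filter_uniq.
Qed.

End Walks.

Section Main.
Variables (R : rcfType) (V EG FH : finType).
Variables (eG : EG -> V * V) (eH : FH -> V * V).

Lemma swap_cond (A B : finType) (P : pred A) (Q : A -> B -> bool) (F : A -> B -> R) :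
  \sum_(a | P a) \sum_(b | Q a b) F a b = \sum_b \sum_(a | P a && Q a b) F a b.
Proof.
have -> : \sum_(a | P a) \sum_(b | Q a b) F a b =
          \sum_a \sum_b (if P a && Q a b then F a b else 0).
  rewrite big_mkcond; apply: eq_bigr => a _; case: (P a) => /=.
    by rewrite big_mkcond.
  by rewrite big1.
by rewrite exchange_big; apply: eq_bigr => b _; rewrite [RHS]big_mkcond.
Qed.

Lemma sum_deltar (K : finType) (p : K) (a : R) (g : K -> R) :
  \sum_k g k * (if k == p then a else 0) = g p * a.
Proof.
rewrite (bigD1 p) //= eqxx big1 ?addr0 // => k /negbTE ->; by rewrite mulr0.
Qed.

Lemma value_gamma (c : EG -> R) (D : FH -> R) (l : EG -> R) (d : FH -> R)
    (gamma : R) (x : {set V} -> R) :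
  (forall e, 0 < c e) -> (forall i, 0 < D i) ->
  \sum_e c e * l e = 1 ->
  (forall C, 0 <= x C) ->
  P'D'_compl_slack eG eH l d gamma x c D ->
  plus_value D d = gamma.
Proof.
move=> cpos Dpos Hcl x0 [cs1 cs2 cs3].
rewrite /plus_value.
have -> : \sum_i D i * d i = \sum_C x C * \sum_(i in deltaH eH C) D i.
  under eq_bigr => i _ do rewrite -(cs2 i (Dpos i)) mulr_sumr.
  rewrite (swap_cond xpredT); apply: eq_bigr => C _.
  by rewrite mulr_sumr; apply: eq_bigr => i _; rewrite mulrC.
have -> : \sum_C x C * \sum_(i in deltaH eH C) D i =
          \sum_C x C * \sum_(e in deltaG eG C) c e.
  apply: eq_bigr => C _.
  have [->|xp] := eqVneq (x C) 0; first by rewrite !mul0r.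
  have xp' : 0 < x C by rewrite lt_def xp x0.
  have := cs3 C xp'; rewrite /tight /sigma => /eqP; rewrite subr_eq0 => /eqP ->.
  done.
have -> : \sum_C x C * \sum_(e in deltaG eG C) c e =
          \sum_e c e * \sum_(C | e \in deltaG eG C) x C.
  under eq_bigr => C _ do rewrite mulr_sumr.
  rewrite (swap_cond xpredT); apply: eq_bigr => e _.
  by rewrite mulr_sumr; apply: eq_bigr => C _; rewrite mulrC.
under eq_bigr => e _ do rewrite (cs1 e (cpos e)).
rewrite -[RHS]mulr1 -Hcl mulr_sumr; apply: eq_bigr => e _; ring.
Qed.


Lemma gamma_le1 (HlH : loopless eH) (c : EG -> R) (D : FH -> R) (l : EG -> R)
    (d : FH -> R) (gamma : R) (x : {set V} -> R) (i0 : FH) (P0 : {set EG}) :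
  (forall e, 0 < c e) -> (forall i, 0 < D i) -> (forall e, 0 < l e) ->
  (forall C, 0 <= x C) ->
  (forall i P, inPi eG eH i P -> d i <= path_length l P) ->
  P'D'_compl_slack eG eH l d gamma x c D ->
  inPi eG eH i0 P0 ->
  (forall C, tight eG eH c D C -> (#|P0 :&: deltaG eG C| <= 1)%N) ->
  gamma <= 1.
Proof.
move=> cpos Dpos lpos x0 Hpath [cs1 cs2 cs3] HP0 Ht.
have Hd := Hpath _ _ HP0.
case: HP0 => vs [es [hw hu hlast hP]].
rewrite hP in Ht Hd.
have hues := walk_uniq hw hu.
have plpos : 0 < path_length l [set e in es].
  case: vs hw hlast hu => [|y vs'].
    move=> _ /= heq; by move: (HlH i0); rewrite heq eqxx.
  case: es hues hP Ht Hd => [|e0 es'] //= _ _ _ _ _ _ _.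
  rewrite /path_length (bigD1 e0) /=; last by rewrite inE mem_head.
  apply: (lt_le_trans (lpos e0)); rewrite lerDl; apply: sumr_ge0 => ? _; exact: ltW.
suff H : gamma * path_length l [set e in es] <= d i0.
  have := le_trans H Hd; rewrite -{2}(mul1r (path_length _ _)) ler_pM2r //.
rewrite /path_length mulr_sumr.
under eq_bigr => e _ do rewrite -(cs1 e (cpos e)).
rewrite (swap_cond (mem [set e in es])) -(cs2 i0 (Dpos i0)) [X in _ <= X]big_mkcond.
apply: ler_sum => C _.
have -> : \sum_(e | (e \in [set e in es]) && (e \in deltaG eG C)) x C =
          \sum_(e in [set e in es] :&: deltaG eG C) x C.
  by apply: eq_bigl => e; rewrite [in RHS]inE.
rewrite sumr_const.
have [->|xp] := eqVneq (x C) 0; first by rewrite mul0rn; case: ifP.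
have xp' : 0 < x C by rewrite lt_def xp x0.
have hle := Ht C (cs3 C xp').
have hpar := walk_parity C hw.
rewrite -card_walk // in hpar.
move: hle hpar; case: #|_| => [|[|k]] //= _.
  by case: ifP => // _; rewrite mulr0n.
rewrite hlast => hpar.
have -> : i0 \in deltaH eH C by rewrite inE -hpar.
by rewrite mulr1n.
Qed.


Lemma sum_pair (F : FH * {set EG} -> R) : \sum_v F v = \sum_i \sum_P F (i, P).
Proof. by rewrite pair_bigA; apply: eq_bigr => [[]]. Qed.

Lemma inPibE i P : inPi eG eH i P -> inPib eG eH i P = true.
Proof. by rewrite /inPib; case: excluded_middle_informative. Qed.

Lemma main_cs (HlH : loopless eH) (c : EG -> R) (D : FH -> R) (l : EG -> R)
    (d : FH -> R) (f : FH -> {set EG} -> R) (gamma : R) (x : {set V} -> R) :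
  witnesses_simple eG eH c D l d f gamma x ->
  (exists (i : FH) (P : {set EG}), inPi eG eH i P /\
     forall C : {set V}, tight eG eH c D C -> (#|P :&: deltaG eG C| <= 1)%N) ->
  cut_sufficient R eG eH.
Proof.
move=> [[[[hc hD [hl hd hcl hpath] hcut] Hopt] _ [[x0 _ _] _] cs] cpos lpos Dpos].
move=> [i0 [P0 [HP0 Ht]]].
have Hval := value_gamma cpos Dpos hcl x0 cs.
have Hg := gamma_le1 HlH cpos Dpos lpos x0 hpath cs HP0 Ht.
have Hbound (c' : EG -> R) (D' : FH -> R) (l' : EG -> R) (d' : FH -> R) : plus_feasible eG eH c' D' l' d' -> plus_value D' d' <= 1.
  by move=> hf; have := Hopt _ _ _ _ hf; rewrite Hval => h; exact: le_trans h Hg.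
move=> c' D' hc' hD' hcut'.
pose A (k : (EG + FH) + (FH * {set EG})) (v : FH * {set EG}) : R :=
  match k with
  | inl (inl e) => if inPib eG eH v.1 v.2 && (e \in v.2) then 1 else 0
  | inl (inr i) => if i == v.1 then (if inPib eG eH v.1 v.2 then -1 else 0) else 0
  | inr w => if v == w then -1 else 0
  end.
pose b (k : (EG + FH) + (FH * {set EG})) : R :=
  match k with inl (inl e) => c' e | inl (inr i) => - D' i | inr _ => 0 end.
case: (farkas A b) => [[y Hy] | [y [Hy1 Hy2 Hy3]]].
  exists (fun i P => y (i, P)); split.
  - move=> i P _; have := Hy (inr (i, P)); rewrite /= sum_delta; lra.
  - move=> e; have := Hy (inl (inl e)); rewrite /= /load.
    suff -> : \sum_v (if inPib eG eH v.1 v.2 && (e \in v.2) then 1 else 0) * y v =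
       \sum_i \sum_(P | inPib eG eH i P && (e \in P)) y (i, P) by [].
    under [RHS]eq_bigr => i _ do rewrite big_mkcond.
    rewrite pair_bigA; apply: eq_bigr => [[i P]] _ /=.
    by case: ifP; rewrite ?mul1r ?mul0r.
  - move=> i; have := Hy (inl (inr i)); rewrite /= /flow_value.
    suff -> : \sum_v (if i == v.1 then (if inPib eG eH v.1 v.2 then -1 else 0) else 0) * y v
        = - \sum_(P | inPib eG eH i P) y (i, P) by move=> h; lra.
    rewrite sum_pair (bigD1 i) //= [X in _ + X]big1 ?addr0; last first.
      move=> i2 /negbTE hi; apply: big1 => P _; by rewrite eq_sym hi mul0r.
    rewrite eqxx [in RHS]big_mkcond -sumrN; apply: eq_bigr => P _.
    by case: ifP; rewrite ?mulN1r ?mul0r ?oppr0.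
pose l' e := y (inl (inl e)).
pose d' i := y (inl (inr i)).
have Hpath' i P : inPi eG eH i P -> d' i <= path_length l' P.
  move=> hP; have := Hy2 (i, P); rewrite !big_sumType /=.
  rewrite (inPibE hP).
  have -> : \sum_e y (inl (inl e)) * (if true && (e \in P) then 1 else 0) =
            path_length l' P.
    rewrite /path_length [RHS]big_mkcond; apply: eq_bigr => e _.
    by case: (e \in P); rewrite /= ?mulr1 ?mulr0.
  have -> : \sum_i2 y (inl (inr i2)) * (if i2 == i then -1 else 0) = d' i * -1.
    by rewrite sum_deltar.
  have -> : \sum_w y (inr w) * (if (i, P) == w then -1 else 0) = y (inr (i, P)) * -1.
    by under eq_bigr do rewrite eq_sym; rewrite sum_deltar.
  have := Hy1 (inr (i, P)); rewrite /d' => h1 h2; lra.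
pose s := \sum_e c' e * l' e.
pose Vv := \sum_i D' i * d' i.
have hsV : s < Vv.
  move: Hy3; rewrite !big_sumType /= /s /Vv.
  rewrite [X in _ + X < 0]big1 ?addr0; last by move=> ? _; rewrite mulr0.
  have -> : \sum_i y (inl (inr i)) * - D' i = - \sum_i D' i * d' i.
    by rewrite -sumrN; apply: eq_bigr => i _; rewrite /d' mulrN mulrC.
  have -> : \sum_e y (inl (inl e)) * c' e = \sum_e c' e * l' e.
    by apply: eq_bigr => e _; rewrite mulrC.
  move=> h; lra.
have hs0 : 0 <= s.
  by apply: sumr_ge0 => e _; apply: mulr_ge0 => //; exact: Hy1.
pose S := \sum_e c' e.
have hS0 : 0 <= S by apply: sumr_ge0.
have [S0|Spos] := eqVneq S 0.
  have c'0 : forall e, c' e = 0.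
    by move=> e; apply: (psumr_eq0P (P := xpredT)) => // ? _.
  have D'0 : forall i, D' i = 0.
    move=> i; have := hcut' [set (eH i).1]; rewrite /sigma.
    rewrite big1 ?sub0r; last by move=> e _; rewrite c'0.
    rewrite oppr_ge0 => h; apply/eqP; rewrite eq_le hD' andbT.
    apply: le_trans h; rewrite (bigD1 i) /=; last first.
      rewrite /deltaH !inE eqxx /=; by move: (HlH i); rewrite eq_sym; case: (_ == _).
    by rewrite lerDl; apply: sumr_ge0.
  move: hsV; rewrite /Vv big1 => [h|i _]; last by rewrite D'0 mul0r.
  by have := hs0; rewrite leNgt h.
have hSp : 0 < S by rewrite lt_def Spos hS0.
pose g := Vv - s.
pose t := g / (2 * S).
pose st := s + g / 2.
have hg : 0 < g by rewrite /g subr_gt0.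
have hst : 0 < st by rewrite /st; apply: ltr_wpDl => //; apply: divr_gt0.
have ht : 0 <= t by apply: divr_ge0; [exact: ltW | apply: mulr_ge0].
pose l2 e := (l' e + t) / st.
pose d2 i := d' i / st.
have Hfeas : plus_feasible eG eH c' D' l2 d2.
  split => //; split.
  - by move=> e; apply: divr_ge0; [apply: addr_ge0 => //; exact: Hy1 | exact: ltW].
  - by move=> i; apply: divr_ge0; [exact: Hy1 | exact: ltW].
  - have -> : \sum_e c' e * l2 e = s / st + t / st * S.
      rewrite /s /S mulr_suml mulr_sumr -big_split; apply: eq_bigr => e _.
      rewrite /l2 /=; field; rewrite gt_eqF //.
    rewrite /t /st /g; field.
    rewrite Spos andbT; apply: lt0r_neq0; lra.
  - move=> i P hP; apply: (@le_trans _ _ (path_length l' P / st)).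
      by rewrite ler_pM2r ?invr_gt0 //; exact: Hpath'.
    rewrite /path_length mulr_suml; apply: ler_sum => e _.
    by rewrite /l2 ler_pM2r ?invr_gt0 // lerDl.
have := Hbound _ _ _ _ Hfeas.
have -> : plus_value D' d2 = Vv / st.
  by rewrite /plus_value /Vv mulr_suml; apply: eq_bigr => i _; rewrite /d2 mulrA.
rewrite ler_pdivrMr // mul1r /st /g => h; lra.
Qed.

End Main.

Unset Implicit Arguments.

Theorem theorem3p5 (R : rcfType) (V EG FH : finType)
    (eG : EG -> V * V) (eH : FH -> V * V)
    (HlG : loopless eG) (HlH : loopless eH)
    (c : EG -> R) (D : FH -> R) (l : EG -> R) (d : FH -> R)
    (f : FH -> {set EG} -> R) (gamma : R) (x : {set V} -> R) :
  witnesses_simple eG eH c D l d f gamma x ->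
  (exists (i : FH) (P : {set EG}), inPi eG eH i P /\
     forall C : {set V}, tight eG eH c D C -> (#|P :&: deltaG eG C| <= 1)%N) ->
  cut_sufficient R eG eH.
Proof. exact: (@main_cs R V EG FH eG eH HlH c D l d f gamma x). Qed.
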